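(* For positive integers $D_1,D_2$ and an integer $u$, let \[ \mathcal{R}'(u,D_1,D_2)=\max_{\substack{(a,D_1)=1\\(b,D_2)=1}}\ \sum_{t\bmod D_1}\big|\widehat S(a,bu,t,1;D_1,D_2)\big|. \] Then $\mathcal{R}'(u,D_1,D_2)=\mathcal{R}(u,D_2,D_1)$.
   Context: Notation: $e(x)=e^{2\pi ix}$. For integers $m_1,m_2,n_1,n_2$ and positive integers $D_1,D_2$, the $GL_3$ Kloosterman sum is \[ S(m_1,m_2,n_1,n_2;D_1,D_2)=\sum e\Big(\frac{m_1B_1+n_1(Y_1D_2-Z_1B_2)}{D_1}\Big)e\Big(\frac{m_2B_2+n_2(Y_2D_1-Z_2B_1)}{D_2}\Big), \] the sum over $B_1,C_1 \bmod D_1$, $B_2,C_2\bmod D_2$ with $\gcd(B_1,C_1,D_1)=\gcd(B_2,C_2,D_2)=1$ and $D_1C_2+B_1B_2+C_1D_2\equiv 0\pmod{D_1D_2}$, where $Y_1B_1+Z_1C_1\equiv 1\pmod{D_1}$, $Y_2B_2+Z_2C_2\equiv1\pmod{D_2}$ (independent of choices). For integers $a,b$ with $(a,D_1)=(b,D_2)=1$ and integers $u,t$, \[ \widehat S(a,u,t,b;D_1,D_2)=\frac{1}{D_1D_2}\sum_{x\bmod D_1}\sum_{y\bmod D_2}S(a,y,x,b;D_1,D_2)\,e\Big(\frac{-xt}{D_1}\Big)e\Big(\frac{-yu}{D_2}\Big), \] and $\mathcal{R}(t,D_1,D_2)=\max_{(ab,D_1)=1}\sum_{u\bmod D_2}|\widehat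 S(a,u,bt,1;D_1,D_2)|$ (maximum over integers $a,b$ coprime to $D_1$). *)

(* Defs.v *)
From HB Require Import structures.
From mathcomp Require Import all_boot all_order all_algebra.
From mathcomp Require Import reals trigo.
From mathcomp Require Import complex.
Set Implicit Arguments. Unset Strict Implicit. Unset Printing Implicit Defensive.
Import Order.TTheory GRing.Theory Num.Theory.
Local Open Scope ring_scope.
Local Open Scope complex_scope.

Section Defs.
Variable R : realType.

(* e(k/n) = exp(2 pi i k / n) *)
Definition ee (k : int) (n : nat) : R[i] :=
  (cos (2 * pi * k%:~R / n%:R)) +i* (sin (2 * pi * k%:~R / n%:R)).

Definition YZ (D : nat) (B C : 'I_D) : 'I_D * 'I_D :=
  odflt (B, C) [pick p : 'I_D * 'I_D | (p.1 * B + p.2 * C == 1 %[mod D])%N].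

Definition kl_cond (D1 D2 : nat) (B1 C1 : 'I_D1) (B2 C2 : 'I_D2) : bool :=
  [&& gcdn (gcdn B1 C1) D1 == 1%N, gcdn (gcdn B2 C2) D2 == 1%N &
      ((D1 * C2 + B1 * B2 + C1 * D2) %% (D1 * D2) == 0)%N].

Definition KlS (m1 m2 n1 n2 : int) (D1 D2 : nat) : R[i] :=
  \sum_(B1 : 'I_D1) \sum_(C1 : 'I_D1) \sum_(B2 : 'I_D2) \sum_(C2 : 'I_D2)
    if kl_cond B1 C1 B2 C2 then
      let Y1 := (YZ B1 C1).1 in let Z1 := (YZ B1 C1).2 in
      let Y2 := (YZ B2 C2).1 in let Z2 := (YZ B2 C2).2 in
      ee (m1 * B1%:Z + n1 * (Y1%:Z * D2%:Z - Z1%:Z * B2%:Z)) D1 *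
      ee (m2 * B2%:Z + n2 * (Y2%:Z * D1%:Z - Z2%:Z * B1%:Z)) D2
    else 0.

Definition KlShat (a u t b : int) (D1 D2 : nat) : R[i] :=
  (D1%:R * D2%:R)^-1 *
  \sum_(x : 'I_D1) \sum_(y : 'I_D2)
     KlS a y%:Z x%:Z b D1 D2 * ee (- (x%:Z * t)) D1 * ee (- (y%:Z * u)) D2.

Definition cabs (z : R[i]) : R := let: a +i* b := z in Num.sqrt (a ^+ 2 + b ^+ 2).

Definition RR (t : int) (D1 D2 : nat) : R :=
  \big[Num.max/0]_(a : 'I_D1 | coprime a D1)
   \big[Num.max/0]_(b : 'I_D1 | coprime b D1)
     \sum_(u : 'I_D2) cabs (KlShat a%:Z u%:Z (b%:Z * t) 1 D1 D2).

Definition RR' (u : int) (D1 D2 : nat) : R :=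
  \big[Num.max/0]_(a : 'I_D1 | coprime a D1)
   \big[Num.max/0]_(b : 'I_D2 | coprime b D2)
     \sum_(t : 'I_D1) cabs (KlShat a%:Z (b%:Z * u) t%:Z 1 D1 D2).

End Defs.

(* Main.v *)
Require Import Defs.
From HB Require Import structures.
From mathcomp Require Import all_boot all_order all_algebra.
From mathcomp Require Import reals.
From mathcomp Require Import trigo complex.
From mathcomp Require Import ring.
Import Order.TTheory GRing.Theory Num.Theory.
Local Open Scope ring_scope.
Set Implicit Arguments. Unset Strict Implicit.

Lemma dvdz_c1 (d E1 c1 e : int) : (d %| E1)%Z -> e = c1 * E1 -> (d %| e)%Z.
Proof. by move=> h ->; rewrite dvdz_mull. Qed.
Lemma dvdz_c2 (d E1 E2 c1 c2 e : int) : (d %| E1)%Z -> (d %| E2)%Z ->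
  e = c1 * E1 + c2 * E2 -> (d %| e)%Z.
Proof. by move=> h1 h2 ->; rewrite rpredD // dvdz_mull. Qed.
Lemma dvdz_c3 (d E1 E2 E3 c1 c2 c3 e : int) : (d %| E1)%Z -> (d %| E2)%Z -> (d %| E3)%Z ->
  e = c1 * E1 + c2 * E2 + c3 * E3 -> (d %| e)%Z.
Proof. by move=> h1 h2 h3 ->; rewrite !rpredD // dvdz_mull. Qed.
Lemma dvdz_c4 (d E1 E2 E3 E4 c1 c2 c3 c4 e : int) : (d %| E1)%Z -> (d %| E2)%Z -> (d %| E3)%Z ->
  (d %| E4)%Z -> e = c1 * E1 + c2 * E2 + c3 * E3 + c4 * E4 -> (d %| e)%Z.
Proof. by move=> h1 h2 h3 h4 ->; rewrite !rpredD // dvdz_mull. Qed.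
Lemma dvdz_c5 (d E1 E2 E3 E4 E5 c1 c2 c3 c4 c5 e : int) : (d %| E1)%Z -> (d %| E2)%Z -> (d %| E3)%Z ->
  (d %| E4)%Z -> (d %| E5)%Z -> e = c1 * E1 + c2 * E2 + c3 * E3 + c4 * E4 + c5 * E5 -> (d %| e)%Z.
Proof. by move=> h1 h2 h3 h4 h5 ->; rewrite !rpredD // dvdz_mull. Qed.
Lemma dvdz_c6 (d E1 E2 E3 E4 E5 E6 c1 c2 c3 c4 c5 c6 e : int) : (d %| E1)%Z -> (d %| E2)%Z -> (d %| E3)%Z ->
  (d %| E4)%Z -> (d %| E5)%Z -> (d %| E6)%Z -> e = c1 * E1 + c2 * E2 + c3 * E3 + c4 * E4 + c5 * E5 + c6 * E6 -> (d %| e)%Z.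
Proof. by move=> h1 h2 h3 h4 h5 h6 ->; rewrite !rpredD // dvdz_mull. Qed.
Arguments dvdz_c6 {d E1 E2 E3 E4 E5 E6} c1 c2 c3 c4 c5 c6 {e}.
Arguments dvdz_c1 {d E1} c1 {e}.
Arguments dvdz_c2 {d E1 E2} c1 c2 {e}.
Arguments dvdz_c3 {d E1 E2 E3} c1 c2 c3 {e}.
Arguments dvdz_c4 {d E1 E2 E3 E4} c1 c2 c3 c4 {e}.
Arguments dvdz_c5 {d E1 E2 E3 E4 E5} c1 c2 c3 c4 c5 {e}.
Lemma dvdz_eq0 (d a b : int) : a = b -> (d %| a - b)%Z.
Proof. by move=> ->; rewrite subrr dvdz0. Qed.
Arguments dvdz_eq0 d {a b}.
Lemma dvdz_mulL (d1 d2 a : int) : (d2 %| a)%Z -> (d1 * d2 %| d1 * a)%Z.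
Proof. by move=> h; rewrite dvdz_mul. Qed.
Lemma dvdz_mulR (d1 d2 a : int) : (d1 %| a)%Z -> (d1 * d2 %| a * d2)%Z.
Proof. by move=> h; rewrite dvdz_mul. Qed.
Lemma dvdz_prodl (d1 d2 a : int) : (d1 * d2 %| a)%Z -> (d1 %| a)%Z.
Proof. by apply: dvdz_trans; rewrite dvdz_mulr. Qed.
Lemma dvdz_prodr (d1 d2 a : int) : (d1 * d2 %| a)%Z -> (d2 %| a)%Z.
Proof. by apply: dvdz_trans; rewrite dvdz_mull. Qed.

Arguments dvdz_prodl {d1 d2 a}.
Arguments dvdz_prodr {d1 d2 a}.
Arguments dvdz_mulL d1 {d2 a}.
Arguments dvdz_mulR {d1} d2 {a}.
Section XF.
Variables d1 d2 b1 c1 b2 y1 z1 : int.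
Hypothesis V1 : (d1 %| b1 * b2 + c1 * d2)%Z.
Hypothesis P1 : (d1 %| y1 * b1 + z1 * c1 - 1)%Z.
Lemma Xa : (d1 %| (y1 * d2 - z1 * b2) * b1 - d2)%Z.
Proof. by apply: (dvdz_c2 d2 (- z1) P1 V1); ring. Qed.
Lemma Xb : (d1 %| (y1 * d2 - z1 * b2) * c1 + b2)%Z.
Proof. by apply: (dvdz_c2 y1 (- b2) V1 P1); ring. Qed.
Lemma XU (l : int) : (d1 %| l * b1 - d2)%Z -> (d1 %| l * c1 + b2)%Z ->
  (d1 %| l - (y1 * d2 - z1 * b2))%Z.
Proof. move=> h1 h2; by apply: (dvdz_c3 (- l) y1 z1 P1 h1 h2); ring. Qed.
End XF.
Arguments Xa {d1 d2 b1 c1 b2 y1 z1}.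
Arguments Xb {d1 d2 b1 c1 b2 y1 z1}.
Arguments XU {d1 d2 b1 c1 b2 y1 z1}.

Section Torus.
Variables d1 d2 s s' b1 c1 b2 c2 y1 z1 y2 z2 k j i b1' c1' c2' : int.
Hypothesis S : (d1 * d2 %| s * s' - 1)%Z.
Hypothesis V : (d1 * d2 %| d1 * c2 + b1 * b2 + c1 * d2)%Z.
Hypothesis P1 : (d1 %| y1 * b1 + z1 * c1 - 1)%Z.
Hypothesis P2 : (d2 %| y2 * b2 + z2 * c2 - 1)%Z.
Hypothesis Eb1 : b1' = s * b1 - k * d1.
Hypothesis Ec1 : c1' = s * c1 - j * d1.
Hypothesis Ec2 : c2' = s * c2 + k * b2 - i * d2.
Let S1 : (d1 %| s * s' - 1)%Z := dvdz_prodl S.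
Let S2 : (d2 %| s * s' - 1)%Z := dvdz_prodr S.
Lemma V1_of : (d1 %| b1 * b2 + c1 * d2)%Z.
Proof. apply: (dvdz_c2 1 (- c2) (dvdz_prodl V) (dvdzz d1)); ring. Qed.
Lemma V2_of : (d2 %| b2 * b1 + c2 * d1)%Z.
Proof. apply: (dvdz_c2 1 (- c1) (dvdz_prodr V) (dvdzz d2)); ring. Qed.
Lemma torV : (d1 * d2 %| d1 * c2' + b1' * b2 + c1' * d2)%Z.
Proof. rewrite Eb1 Ec1 Ec2; apply: (dvdz_c2 s (-(i + j)) V (dvdzz (d1 * d2))); ring. Qed.
Lemma torP1 : (d1 %| (s' * y1) * b1' + (s' * z1) * c1' - 1)%Z.
Proof. rewrite Eb1 Ec1; apply: (dvdz_c3 (y1 * b1 + z1 * c1) 1 (-(s' * (y1 * k + z1 * j))) S1 P1 (dvdzz d1)); ring. Qed.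
Lemma torP2 : (d2 %| (y2 - s' * z2 * k) * b2 + (s' * z2) * c2' - 1)%Z.
Proof. rewrite Ec2; apply: (dvdz_c3 (z2 * c2) 1 (-(s' * z2 * i)) S2 P2 (dvdzz d2)); ring. Qed.
Lemma torX1a : (d1 %| (s' * (y1 * d2 - z1 * b2)) * b1' - d2)%Z.
Proof. rewrite Eb1; apply: (dvdz_c3 ((y1 * d2 - z1 * b2) * b1) 1 (-(s' * (y1 * d2 - z1 * b2) * k)) S1 (Xa V1_of P1) (dvdzz d1)); ring. Qed.
Lemma torX1b : (d1 %| (s' * (y1 * d2 - z1 * b2)) * c1' + b2)%Z.
Proof. rewrite Ec1; apply: (dvdz_c3 ((y1 * d2 - z1 * b2) * c1) 1 (-(s' * (y1 * d2 - z1 * b2) * j)) S1 (Xb V1_of P1) (dvdzz d1)); ring. Qed.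
Lemma torX2a : (d2 %| (y2 * d1 - z2 * b1) * b2 - d1)%Z.
Proof. exact: (Xa V2_of P2). Qed.
Lemma torX2b : (d2 %| (y2 * d1 - z2 * b1) * c2' + b1')%Z.
Proof. rewrite Ec2 Eb1; apply: (dvdz_c3 s k (-((y2 * d1 - z2 * b1) * i)) (Xb V2_of P2) (Xa V2_of P2) (dvdzz d2)); ring. Qed.
End Torus.

Lemma tor_comp (d1 d2 s s' w b1 b1' b2 c2 c2' c2'' k k' i i' : int) :
  d1 != 0 -> s * s' - 1 = w * (d1 * d2) ->
  b1' = s * b1 - k * d1 -> b1 = s' * b1' - k' * d1 ->
  c2' = s * c2 + k * b2 - i * d2 -> c2'' = s' * c2' + k' * b2 - i' * d2 ->
  (d2 %| c2'' - c2)%Z.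
Proof.
move=> d1nz hw hb1 hb1' hc2 hc2'.
have hk : s' * k + k' = w * d2 * b1.
  apply/eqP; rewrite -subr_eq0; apply/eqP.
  have h : d1 * (s' * k + k' - w * d2 * b1) =
    - s' * (s * b1 - k * d1 - b1') - (s' * b1' - k' * d1 - b1) + (s * s' - 1 - w * (d1 * d2)) * b1 by ring.
  move: h; rewrite -hb1 -hb1' hw !subrr mul0r mulr0 subr0 oppr0 add0r => /eqP; rewrite mulf_eq0 (negPf d1nz) /=.
  by move/eqP.
rewrite hc2' hc2.
apply: (dvdz_c2 (w * (d1 * c2) + w * b2 * b1) (-(s' * i + i')) (dvdzz d2) (dvdzz d2)).
have -> : s' * (s * c2 + k * b2 - i * d2) + k' * b2 - i' * d2 - c2 =
   (s * s' - 1) * c2 + (s' * k + k') * b2 - (s' * i + i') * d2 by ring.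
rewrite hw hk; ring.
Qed.

Section Inv.
Variables d1 d2 b1 c1 b2 c2 y1 z1 y2 z2 k l i j b1' b2' c1' c2' : int.
Hypothesis V : (d1 * d2 %| d1 * c2 + b1 * b2 + c1 * d2)%Z.
Hypothesis P1 : (d1 %| y1 * b1 + z1 * c1 - 1)%Z.
Hypothesis P2 : (d2 %| y2 * b2 + z2 * c2 - 1)%Z.
Let x1 := y1 * d2 - z1 * b2.
Let x2 := y2 * d1 - z2 * b1.
Hypothesis Eb1 : b1' = x1 - k * d1.
Hypothesis Eb2 : b2' = x2 - l * d2.
Hypothesis Ec1 : c1' = z2 + l * b1' - j * d1.
Hypothesis Ec2 : c2' = z1 + k * b2' - i * d2.
Let V1 : (d1 %| b1 * b2 + c1 * d2)%Z.
Proof. apply: (dvdz_c2 1 (- c2) (dvdz_prodl V) (dvdzz d1)); ring. Qed.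
Let V2 : (d2 %| b2 * b1 + c2 * d1)%Z.
Proof. apply: (dvdz_c2 1 (- c1) (dvdz_prodr V) (dvdzz d2)); ring. Qed.

Lemma invV : (d1 * d2 %| d1 * c2' + b1' * b2' + c1' * d2)%Z.
Proof.
rewrite Ec1 Ec2 Eb1 Eb2 /x1 /x2.
apply: (dvdz_c4 (y1 * y2 - k * l - i - j) (z1 * z2) (- z1) (- z2) (dvdzz (d1 * d2)) V
  (dvdz_mulL d1 P2) (dvdz_mulR d2 P1)); ring.
Qed.

Lemma invP1 : (d1 %| (- ((y2 * b2 + z2 * c2 - 1) %/ d2)%Z * b1 - y2 * c1 - l * c2) * b1' + c2 * c1' - 1)%Z.
Proof.
set p2 := ((y2 * b2 + z2 * c2 - 1) %/ d2)%Z.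
have hp2 : y2 * b2 + z2 * c2 - 1 = p2 * d2 by rewrite divzK.
rewrite Ec1 Eb1.
apply: (dvdz_c4 (- p2) (- y2) (k * (p2 * b1 + y2 * c1) - c2 * j) 1 (Xa V1 P1) (Xb V1 P1) (dvdzz d1)
  (dvdz_eq0 d1 hp2)); rewrite /x1; ring.
Qed.

Lemma invX1a : (d1 %| b1 * b1' - d2)%Z.
Proof. rewrite Eb1; apply: (dvdz_c2 1 (-(k * b1)) (Xa V1 P1) (dvdzz d1)); rewrite /x1; ring. Qed.
Lemma invX1b : (d1 %| b1 * c1' + b2')%Z.
Proof.
rewrite Ec1 Eb1 Eb2; apply: (dvdz_c2 l (y2 - j * b1 - l * k * b1) (Xa V1 P1) (dvdzz d1)); rewrite /x1 /x2; ring.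
Qed.
End Inv.

Section InvInv.
Variables d1 d2 b1 c1 b2 c2 y1 z1 y2 z2 k l i b1' b2' c2' y2' z2' l' q p1 p2' : int.
Hypothesis ZV : d1 * c2 + b1 * b2 + c1 * d2 = q * (d1 * d2).
Hypothesis ZP1 : y1 * b1 + z1 * c1 - 1 = p1 * d1.
Hypothesis ZP2' : y2' * b2' + z2' * c2' - 1 = p2' * d2.
Hypothesis X2b : (d2 %| (y2 * d1 - z2 * b1) * c2 + b1)%Z.
Hypothesis Eb1 : b1' = (y1 * d2 - z1 * b2) - k * d1.
Hypothesis Eb2 : b2' = (y2 * d1 - z2 * b1) - l * d2.
Hypothesis Ec2 : c2' = z1 + k * b2' - i * d2.
Hypothesis El' : b2 = (y2' * d1 - z2' * b1') - l' * d2.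
Lemma invinv (d2nz : d2 != 0) : (d1 %| z2' + l' * b1 - c1)%Z.
Proof.
rewrite -(dvdz_mul2r (p := d2)) //.
set W := b1 * (y2' + z2' * k) + c2 * (1 - z2' * z1).
have hW : (d2 %| W)%Z.
  apply: (dvdz_c5 (y2' + z2' * k) (c2 * (- p2' - z2' * i - l * (y2' + z2' * k)))
     (- c2) (c2 * z2') (c2 * (y2' + z2' * k)) X2b (dvdzz d2) (dvdz_eq0 d2 ZP2')
     (dvdz_eq0 d2 Ec2) (dvdz_eq0 d2 Eb2)); rewrite /W; ring.
apply: (dvdz_c6 1 (- q - z2' * p1 + z2' * z1 * q) b1 (- (z2' * b1)) (- (z2' * d2)) (z2' * z1 - 1)
   (dvdz_mulL d1 hW) (dvdzz (d1 * d2)) (dvdz_eq0 (d1 * d2) El') (dvdz_eq0 (d1 * d2) Eb1)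
   (dvdz_eq0 (d1 * d2) ZP1) (dvdz_eq0 (d1 * d2) ZV)); rewrite /W; ring.
Qed.
End InvInv.

Lemma natmod_dvd (a b d : nat) : (a == b %[mod d])%N = (d%:Z %| a%:Z - b%:Z)%Z.
Proof. by rewrite -eqz_mod_dvd -eqz_nat -!modz_nat. Qed.

Lemma dvdn_dvdz (d m : nat) : (d %| m)%N = (d%:Z %| m%:Z)%Z.
Proof. by rewrite dvdzE !absz_nat. Qed.

Lemma bez_prim (D B C : nat) (y z : int) :
  (D%:Z %| y * B%:Z + z * C%:Z - 1)%Z -> gcdn (gcdn B C) D == 1%N.
Proof.
move=> h.
set g := gcdn (gcdn B C) D.
have gB : (g%:Z %| B%:Z)%Z by rewrite -dvdn_dvdz /g (dvdn_trans (dvdn_gcdl _ _)) // dvdn_gcdl.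
have gC : (g%:Z %| C%:Z)%Z by rewrite -dvdn_dvdz /g (dvdn_trans (dvdn_gcdl _ _)) // dvdn_gcdr.
have gD : (g%:Z %| D%:Z)%Z by rewrite -dvdn_dvdz /g dvdn_gcdr.
have g1 : (g%:Z %| 1)%Z.
  have h' := dvdz_trans gD h.
  apply: (dvdz_c3 y z (-1) gB gC h'); ring.
by move: g1; rewrite dvdz1 absz_nat.
Qed.

Lemma prim_bez (D B C : nat) :
  gcdn (gcdn B C) D == 1%N -> exists y z : int, (D%:Z %| y * B%:Z + z * C%:Z - 1)%Z.
Proof.
move=> /eqP h.
have [u1 [v1 e1]] := Bezoutz B%:Z C%:Z.
have [u2 [v2 e2]] := Bezoutz (gcdz B%:Z C%:Z) D%:Z.
have gz : gcdz B%:Z C%:Z = (gcdn B C)%:Z by rewrite /gcdz !absz_nat.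
have gz2 : gcdz (gcdz B%:Z C%:Z) D%:Z = 1 by rewrite gz /gcdz !absz_nat h.
exists (u2 * u1), (u2 * v1).
apply: (dvdz_c1 (- v2) (dvdzz D%:Z)).
have : u2 * gcdz B%:Z C%:Z + v2 * D%:Z - 1 = 0 by rewrite e2 gz2 subrr.
rewrite -e1 => /eqP; rewrite subr_eq0 => /eqP e3.
rewrite -[X in _ - X]e3; ring.
Qed.

Definition ordz (n : nat) (x : int) : 'I_n.+1 := inord `|(x %% n.+1)%Z|%N.

Lemma ordzE (n : nat) (x : int) : ((ordz n x : nat) : int) = (x %% n.+1)%Z.
Proof.
rewrite /ordz inordK; first by rewrite gez0_abs // modz_ge0.
have := ltz_mod x (d := n.+1) isT.
rewrite -[(x %% n.+1)%Z]gez0_abs ?modz_ge0 //.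
Qed.

Lemma ordz_split (n : nat) (x : int) : ((ordz n x : nat) : int) = x - (x %/ n.+1)%Z * n.+1.
Proof. by rewrite ordzE {2}(divz_eq x n.+1) addrC addKr. Qed.

Lemma ordz_eq (n : nat) (x : int) (o : 'I_n.+1) : (n.+1%:Z %| x - (o : nat)%:Z)%Z -> ordz n x = o.
Proof.
move=> h; apply: val_inj => /=; apply/eqP; rewrite -eqz_nat ordzE.
have -> : x = ((x - o%:Z) %/ n.+1)%Z * n.+1 + o%:Z by rewrite divzK // subrK.
rewrite modzMDl modz_small //; apply/andP; split => //.
by rewrite ltz_nat ltn_ord.
Qed.

Lemma ordz_dvd (n : nat) (x : int) : (n.+1%:Z %| x - (ordz n x : nat)%:Z)%Z.
Proof. rewrite ordz_split; apply: (dvdz_c1 (x %/ n.+1)%Z (dvdzz _)); ring. Qed.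

Lemma YZ_spec (n : nat) (B C : 'I_n.+1) : gcdn (gcdn B C) n.+1 == 1%N ->
  (n.+1%:Z %| ((YZ B C).1 : nat)%:Z * (B : nat)%:Z + ((YZ B C).2 : nat)%:Z * (C : nat)%:Z - 1)%Z.
Proof.
move=> h; rewrite /YZ; case: pickP => [p /= hp | hnone].
  by move: hp; rewrite natmod_dvd PoszD !PoszM.
exfalso; have [y [z hyz]] := prim_bez h.
have := hnone (ordz n y, ordz n z); rewrite /= natmod_dvd PoszD !PoszM.
suff -> : (n.+1%:Z %| (ordz n y : nat)%:Z * (B : nat)%:Z + (ordz n z : nat)%:Z * (C : nat)%:Z - (1%N : int))%Z by [].
apply: (dvdz_c3 1 (- (B : nat)%:Z) (- (C : nat)%:Z) hyz (ordz_dvd n y) (ordz_dvd n z)); ring.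
Qed.

Section Tup.
Variables n1 n2 : nat.
Local Notation D1 := n1.+1.
Local Notation D2 := n2.+1.
Definition tup := (('I_D1 * 'I_D1) * ('I_D2 * 'I_D2))%type.
Definition tb1 (p : tup) : int := (p.1.1 : nat).
Definition tc1 (p : tup) : int := (p.1.2 : nat).
Definition tb2 (p : tup) : int := (p.2.1 : nat).
Definition tc2 (p : tup) : int := (p.2.2 : nat).
Definition ty1 (p : tup) : int := ((YZ p.1.1 p.1.2).1 : nat).
Definition tz1 (p : tup) : int := ((YZ p.1.1 p.1.2).2 : nat).
Definition ty2 (p : tup) : int := ((YZ p.2.1 p.2.2).1 : nat).
Definition tz2 (p : tup) : int := ((YZ p.2.1 p.2.2).2 : nat).
Definition tx1 (p : tup) : int := ty1 p * D2%:Z - tz1 p * tb2 p.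
Definition tx2 (p : tup) : int := ty2 p * D1%:Z - tz2 p * tb1 p.
Definition tvalid (p : tup) : bool := kl_cond p.1.1 p.1.2 p.2.1 p.2.2.

Lemma tvalidP (p : tup) : tvalid p ->
  [/\ (D1%:Z %| ty1 p * tb1 p + tz1 p * tc1 p - 1)%Z,
      (D2%:Z %| ty2 p * tb2 p + tz2 p * tc2 p - 1)%Z &
      (D1%:Z * D2%:Z %| D1%:Z * tc2 p + tb1 p * tb2 p + tc1 p * D2%:Z)%Z].
Proof.
case/and3P => g1 g2 h; split; first exact: YZ_spec g1.
  exact: YZ_spec g2.
have h' : ((D1 * D2)%N %| D1 * p.2.2 + p.1.1 * p.2.1 + p.1.2 * D2)%N := h.
by move: h'; rewrite dvdn_dvdz !PoszD !PoszM.
Qed.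

Lemma tvalidI (p : tup) (y1 z1 y2 z2 : int) :
  (D1%:Z %| y1 * tb1 p + z1 * tc1 p - 1)%Z ->
  (D2%:Z %| y2 * tb2 p + z2 * tc2 p - 1)%Z ->
  (D1%:Z * D2%:Z %| D1%:Z * tc2 p + tb1 p * tb2 p + tc1 p * D2%:Z)%Z -> tvalid p.
Proof.
move=> h1 h2 h3; apply/and3P; split; first exact: bez_prim h1.
  exact: bez_prim h2.
change ((D1 * D2)%N %| D1 * p.2.2 + p.1.1 * p.2.1 + p.1.2 * D2)%N.
by rewrite dvdn_dvdz !PoszD !PoszM.
Qed.

Lemma tx1a (p : tup) : tvalid p -> (D1%:Z %| tx1 p * tb1 p - D2%:Z)%Z.
Proof. by case/tvalidP => P1 P2 hV; apply: Xa (V1_of hV) P1. Qed.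
Lemma tx1b (p : tup) : tvalid p -> (D1%:Z %| tx1 p * tc1 p + tb2 p)%Z.
Proof. by case/tvalidP => P1 P2 hV; apply: Xb (V1_of hV) P1. Qed.
Lemma tx2a (p : tup) : tvalid p -> (D2%:Z %| tx2 p * tb2 p - D1%:Z)%Z.
Proof. by case/tvalidP => P1 P2 hV; apply: torX2a hV P2. Qed.
Lemma tx2b (p : tup) : tvalid p -> (D2%:Z %| tx2 p * tc2 p + tb1 p)%Z.
Proof. by case/tvalidP => P1 P2 hV; apply: Xb (V2_of hV) P2. Qed.

Lemma tx1U (p : tup) (l : int) : tvalid p ->
  (D1%:Z %| l * tb1 p - D2%:Z)%Z -> (D1%:Z %| l * tc1 p + tb2 p)%Z -> (D1%:Z %| tx1 p - l)%Z.
Proof.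
case/tvalidP => P1 P2 hV h1 h2; have := XU P1 _ h1 h2.
by move=> h; rewrite -rpredN opprB.
Qed.
Lemma tx2U (p : tup) (l : int) : tvalid p ->
  (D2%:Z %| l * tb2 p - D1%:Z)%Z -> (D2%:Z %| l * tc2 p + tb1 p)%Z -> (D2%:Z %| tx2 p - l)%Z.
Proof.
case/tvalidP => P1 P2 hV h1 h2; have := XU P2 _ h1 h2.
by move=> h; rewrite -rpredN opprB.
Qed.
End Tup.

Lemma Vswap (d1 d2 b1 c1 b2 c2 : int) :
  (d1 * d2 %| d1 * c2 + b1 * b2 + c1 * d2)%Z -> (d2 * d1 %| d2 * c1 + b2 * b1 + c2 * d1)%Z.
Proof.
have -> : d2 * c1 + b2 * b1 + c2 * d1 = d1 * c2 + b1 * b2 + c1 * d2 by ring.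
by rewrite [d2 * d1]mulrC.
Qed.

Lemma dvdz_exact (d x : int) : (d %| x)%Z -> x = (x %/ d)%Z * d.
Proof. by move=> h; rewrite divzK. Qed.

Section TupTor.
Variables n1 n2 : nat.
Local Notation D1 := n1.+1.
Local Notation D2 := n2.+1.
Local Notation tup := (tup n1 n2).

Definition ttor (s : int) (p : tup) : tup :=
  ((ordz n1 (s * tb1 p), ordz n1 (s * tc1 p)),
   (p.2.1, ordz n2 (s * tc2 p + (s * tb1 p %/ D1)%Z * tb2 p))).

Variables s s' : int.
Hypothesis S : (D1%:Z * D2%:Z %| s * s' - 1)%Z.

Lemma ttor_eb1 p : tb1 (ttor s p) = s * tb1 p - (s * tb1 p %/ D1)%Z * D1.
Proof. by rewrite /tb1 /tc1 /tc2 /ttor /= ordz_split. Qed.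
Lemma ttor_ec1 p : tc1 (ttor s p) = s * tc1 p - (s * tc1 p %/ D1)%Z * D1.
Proof. by rewrite /tb1 /tc1 /tc2 /ttor /= ordz_split. Qed.
Lemma ttor_ec2 p : tc2 (ttor s p) = s * tc2 p + (s * tb1 p %/ D1)%Z * tb2 p -
   ((s * tc2 p + (s * tb1 p %/ D1)%Z * tb2 p) %/ D2)%Z * D2.
Proof. by rewrite /tb1 /tc1 /tc2 /ttor /= ordz_split. Qed.

Lemma ttor_valid p : tvalid p -> tvalid (ttor s p).
Proof.
case/tvalidP => P1 P2 hV.
apply: (tvalidI (torP1 S P1 (ttor_eb1 p) (ttor_ec1 p)) (torP2 S P2 (ttor_ec2 p))).
exact: (torV hV (ttor_eb1 p) (ttor_ec1 p) (ttor_ec2 p)).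
Qed.

Lemma ttor_x1 p : tvalid p -> (D1%:Z %| tx1 (ttor s p) - s' * tx1 p)%Z.
Proof.
move=> vp; have := vp; case/tvalidP => P1 P2 hV.
apply: (tx1U (ttor_valid vp)).
  exact: (torX1a S hV P1 (ttor_eb1 p)).
exact: (torX1b S hV P1 (ttor_ec1 p)).
Qed.

Lemma ttor_x2 p : tvalid p -> (D2%:Z %| tx2 (ttor s p) - tx2 p)%Z.
Proof.
move=> vp; have := vp; case/tvalidP => P1 P2 hV.
apply: (tx2U (ttor_valid vp)).
  exact: (torX2a hV P2).
exact: (torX2b hV P2 (ttor_eb1 p) (ttor_ec2 p)).
Qed.

Lemma ttor_b1 p : (D1%:Z %| tb1 (ttor s p) - s * tb1 p)%Z.
Proof. rewrite ttor_eb1; apply: (dvdz_c1 (- (s * tb1 p %/ D1)%Z) (dvdzz _)); ring. Qed.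

Hypothesis S' : (D1%:Z * D2%:Z %| s' * s - 1)%Z.

Lemma ttor_comp p : tvalid p -> ttor s' (ttor s p) = p.
Proof.
move=> vp.
have S1 : (D1%:Z %| s * s' - 1)%Z := dvdz_prodl S.
have eb1 : ordz n1 (s' * tb1 (ttor s p)) = p.1.1.
  apply: ordz_eq; rewrite ttor_eb1.
  apply: (dvdz_c2 (tb1 p) (- (s' * (s * tb1 p %/ D1)%Z)) S1 (dvdzz _)); rewrite /tb1; ring.
have ec1 : ordz n1 (s' * tc1 (ttor s p)) = p.1.2.
  apply: ordz_eq; rewrite ttor_ec1.
  apply: (dvdz_c2 (tc1 p) (- (s' * (s * tc1 p %/ D1)%Z)) S1 (dvdzz _)); rewrite /tc1; ring.
have ec2 : ordz n2 (s' * tc2 (ttor s p) + (s' * tb1 (ttor s p) %/ D1)%Z * tb2 (ttor s p)) = p.2.2.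
  apply: ordz_eq.
  have hw := dvdz_exact S.
  have hb1 : tb1 p = s' * tb1 (ttor s p) - (s' * tb1 (ttor s p) %/ D1)%Z * D1.
    by rewrite -ordz_split eb1.
  apply: (tor_comp (c2'' := s' * tc2 (ttor s p) + (s' * tb1 (ttor s p) %/ D1)%Z * tb2 (ttor s p))
           (i' := 0) _ hw (ttor_eb1 p) hb1 (ttor_ec2 p)) => //.
  by rewrite mul0r subr0.
case: p vp eb1 ec1 ec2 => [[B1 C1] [B2 C2]] vp eb1 ec1 ec2.
by rewrite /ttor /= eb1 ec1 ec2.
Qed.
End TupTor.

Section TupInv.
Variables n1 n2 : nat.
Local Notation D1 := n1.+1.
Local Notation D2 := n2.+1.
Local Notation tup := (tup n1 n2).

Definition tinv (p : tup) : tup :=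
  ((ordz n1 (tx1 p), ordz n1 (tz2 p + (tx2 p %/ D2)%Z * (ordz n1 (tx1 p) : nat)%:Z)),
   (ordz n2 (tx2 p), ordz n2 (tz1 p + (tx1 p %/ D1)%Z * (ordz n2 (tx2 p) : nat)%:Z))).

Lemma tinv_eb1 p : tb1 (tinv p) = tx1 p - (tx1 p %/ D1)%Z * D1.
Proof. by rewrite /tb1 /tinv /= ordz_split. Qed.
Lemma tinv_eb2 p : tb2 (tinv p) = tx2 p - (tx2 p %/ D2)%Z * D2.
Proof. by rewrite /tb2 /tinv /= ordz_split. Qed.
Lemma tinv_ec1 p : tc1 (tinv p) = tz2 p + (tx2 p %/ D2)%Z * tb1 (tinv p) -
   ((tz2 p + (tx2 p %/ D2)%Z * tb1 (tinv p)) %/ D1)%Z * D1.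
Proof. by rewrite /tc1 /tinv /= ordz_split. Qed.
Lemma tinv_ec2 p : tc2 (tinv p) = tz1 p + (tx1 p %/ D1)%Z * tb2 (tinv p) -
   ((tz1 p + (tx1 p %/ D1)%Z * tb2 (tinv p)) %/ D2)%Z * D2.
Proof. by rewrite /tc2 /tinv /= ordz_split. Qed.

Lemma tinv_valid p : tvalid p -> tvalid (tinv p).
Proof.
case/tvalidP => P1 P2 hV.
apply: (tvalidI (invP1 hV P1 P2 (tinv_eb1 p) (tinv_ec1 p))
                (invP1 (Vswap hV) P2 P1 (tinv_eb2 p) (tinv_ec2 p))).
exact: (invV hV P1 P2 (tinv_eb1 p) (tinv_eb2 p) (tinv_ec1 p) (tinv_ec2 p)).
Qed.

Lemma tinv_x1 p : tvalid p -> (D1%:Z %| tx1 (tinv p) - tb1 p)%Z.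
Proof.
move=> vp; have := vp; case/tvalidP => P1 P2 hV.
apply: (tx1U (tinv_valid vp)).
  exact: (invX1a hV P1 (tinv_eb1 p)).
exact: (invX1b hV P1 (tinv_eb1 p) (tinv_eb2 p) (tinv_ec1 p)).
Qed.

Lemma tinv_x2 p : tvalid p -> (D2%:Z %| tx2 (tinv p) - tb2 p)%Z.
Proof.
move=> vp; have := vp; case/tvalidP => P1 P2 hV.
apply: (tx2U (tinv_valid vp)).
  exact: (invX1a (Vswap hV) P2 (tinv_eb2 p)).
exact: (invX1b (Vswap hV) P2 (tinv_eb2 p) (tinv_eb1 p) (tinv_ec2 p)).
Qed.

Lemma tinv_b1 p : (D1%:Z %| tb1 (tinv p) - tx1 p)%Z.
Proof. rewrite tinv_eb1; apply: (dvdz_c1 (- (tx1 p %/ D1)%Z) (dvdzz _)); ring. Qed.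
Lemma tinv_b2 p : (D2%:Z %| tb2 (tinv p) - tx2 p)%Z.
Proof. rewrite tinv_eb2; apply: (dvdz_c1 (- (tx2 p %/ D2)%Z) (dvdzz _)); ring. Qed.

Lemma tinv_inv p : tvalid p -> tinv (tinv p) = p.
Proof.
move=> vp; have := vp; case/tvalidP => P1 P2 hV.
have vq := tinv_valid vp; have := vq; case/tvalidP => Q1 Q2 hW.
set q := tinv p in vq Q1 Q2 hW *.
have eb1 : ordz n1 (tx1 q) = p.1.1 by apply: ordz_eq; exact: tinv_x1.
have eb2 : ordz n2 (tx2 q) = p.2.1 by apply: ordz_eq; exact: tinv_x2.
have ec1 : ordz n1 (tz2 q + (tx2 q %/ D2)%Z * (ordz n1 (tx1 q) : nat)%:Z) = p.1.2.
  apply: ordz_eq; rewrite eb1.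
  apply: (invinv (dvdz_exact hV) (dvdz_exact P1) (dvdz_exact Q2) (tx2b vp)
            (tinv_eb1 p) (tinv_eb2 p) (tinv_ec2 p) _ isT).
  by rewrite -[tb2 p]/((p.2.1 : nat)%:Z) -eb2 ordz_split.
have ec2 : ordz n2 (tz1 q + (tx1 q %/ D1)%Z * (ordz n2 (tx2 q) : nat)%:Z) = p.2.2.
  apply: ordz_eq; rewrite eb2.
  apply: (invinv (dvdz_exact (Vswap hV)) (dvdz_exact P2) (dvdz_exact Q1) (tx1b vp)
            (tinv_eb2 p) (tinv_eb1 p) (tinv_ec1 p) _ isT).
  by rewrite -[tb1 p]/((p.1.1 : nat)%:Z) -eb1 ordz_split.
rewrite [tinv q]/tinv ec1 ec2 eb1 eb2.
by case: (p) => [[B1 C1] [B2 C2]].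
Qed.
End TupInv.

Section C.
Variable R : realType.

Lemma per_nat (f : R -> R) (T : R) : periodic f T -> forall x (m : nat), f (x + m%:R * T) = f x.
Proof.
move=> hf x; elim=> [|m IH]; first by rewrite mul0r addr0.
by rewrite -addn1 natrD mulrDl mul1r addrA hf.
Qed.

Lemma per_int (f : R -> R) (T : R) : periodic f T -> forall x (q : int), f (x + q%:~R * T) = f x.
Proof.
move=> hf x [m|m]; first by rewrite -pmulrn per_nat.
rewrite NegzE mulrNz mulNr.
rewrite -{2}[x](subrK ((m.+1)%:R * T)) per_nat //.
Qed.

Lemma ee_mod (n : nat) (k k' : int) : (n.+1%:Z %| k - k')%Z -> ee R k n.+1 = ee R k' n.+1.
Proof.
move=> /dvdzP [q hq].
have -> : k = k' + q * n.+1 by rewrite -hq addrC subrK.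
have nz : (n.+1%:R : R) != 0 by rewrite pnatr_eq0.
have e : 2 * pi * (k' + q * n.+1)%:~R / n.+1%:R = 2 * pi * k'%:~R / n.+1%:R + q%:~R * (pi *+ 2) :> R.
  rewrite intrD intrM -[(n.+1%:Z)%:~R]/(n.+1%:R) mulr2n.
  field; by rewrite addrC natr1 pnatr_eq0.
by rewrite /ee e (per_int (@cosD2pi R)) (per_int (@sinD2pi R)).
Qed.

Lemma KlS_tup (n1 n2 : nat) (m1 m2 k1 k2 : int) :
  KlS R m1 m2 k1 k2 n1.+1 n2.+1 =
  \sum_(p : tup n1 n2) (if tvalid p then
     ee R (m1 * tb1 p + k1 * tx1 p) n1.+1 * ee R (m2 * tb2 p + k2 * tx2 p) n2.+1 else 0).
Proof.
rewrite /KlS.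
under eq_bigr do under eq_bigr do rewrite pair_bigA.
rewrite pair_bigA pair_bigA.
by apply: eq_bigr.
Qed.

Lemma sum_valid_reindex (V : nmodType) (n1 n2 : nat) (h h' : tup n1 n2 -> tup n1 n2) (G : tup n1 n2 -> V) :
  (forall p, tvalid p -> tvalid (h p)) ->
  (forall p, tvalid p -> h' (h p) = p) ->
  \sum_p (if tvalid p then G p else 0) = \sum_p (if tvalid p then G (h p) else 0).
Proof.
move=> hv hc.
pose H p := if tvalid p then h p else p.
pose H' p := if tvalid p then h' p else p.
have HK : cancel H H'.
  move=> p; case vp: (tvalid p).
    by rewrite /H vp /H' hv // hc.
  by rewrite /H vp /H' vp.
rewrite (reindex_inj (can_inj HK)); apply: eq_bigr => p _.
case vp: (tvalid p); by rewrite /H vp /= ?vp ?hv.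
Qed.

Lemma KlS_inv (n1 n2 : nat) (m1 m2 k1 k2 : int) :
  KlS R m1 m2 k1 k2 n1.+1 n2.+1 = KlS R k1 k2 m1 m2 n1.+1 n2.+1.
Proof.
rewrite !KlS_tup (sum_valid_reindex _ (@tinv_valid n1 n2) (@tinv_inv n1 n2)).
apply: eq_bigr => p _; case: ifP => // vp; congr (_ * _); apply: ee_mod.
  apply: (dvdz_c2 m1 k1 (tinv_b1 p) (tinv_x1 vp)); ring.
apply: (dvdz_c2 m2 k2 (tinv_b2 p) (tinv_x2 vp)); ring.
Qed.

Lemma KlS_tor (n1 n2 : nat) (s s' : int) (m1 m2 k1 k2 : int) :
  (n1.+1%:Z * n2.+1%:Z %| s * s' - 1)%Z ->
  KlS R m1 m2 k1 k2 n1.+1 n2.+1 = KlS R (s * m1) m2 (s' * k1) k2 n1.+1 n2.+1.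
Proof.
move=> S.
have S' : (n1.+1%:Z * n2.+1%:Z %| s' * s - 1)%Z by rewrite mulrC.
rewrite !KlS_tup (sum_valid_reindex (h' := ttor s') _ (ttor_valid S) (ttor_comp S)).
apply: eq_bigr => p _; case: ifP => // vp; congr (_ * _); apply: ee_mod.
  apply: (dvdz_c2 m1 k1 (ttor_b1 s p) (ttor_x1 S vp)); ring.
apply: (dvdz_c1 k2 (ttor_x2 S vp)); rewrite /tb2 /=; ring.
Qed.

Lemma KlS_swap (n1 n2 : nat) (m1 m2 k1 k2 : int) :
  KlS R m1 m2 k1 k2 n1.+1 n2.+1 = KlS R m2 m1 k2 k1 n2.+1 n1.+1.
Proof.
rewrite !KlS_tup.
pose h (q : tup n2 n1) : tup n1 n2 := (q.2, q.1).
have hb : bijective h by exists (fun p : tup n1 n2 => (p.2, p.1)) => [[a b]|[a b]].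
rewrite (reindex h); last by apply: onW_bij.
apply: eq_bigr => q _.
have -> : tvalid (h q) = tvalid q.
  rewrite /tvalid /h /= /kl_cond andbCA; congr (_ && (_ && _)).
  by congr (_ %% _ == 0)%N; ring.
by case: ifP => // _; rewrite mulrC.
Qed.

Lemma KlS_mod (n1 n2 : nat) (m1 m2 k1 k2 m1' m2' k1' k2' : int) :
  (n1.+1%:Z %| m1 - m1')%Z -> (n2.+1%:Z %| m2 - m2')%Z ->
  (n1.+1%:Z %| k1 - k1')%Z -> (n2.+1%:Z %| k2 - k2')%Z ->
  KlS R m1 m2 k1 k2 n1.+1 n2.+1 = KlS R m1' m2' k1' k2' n1.+1 n2.+1.
Proof.
move=> h1 h2 h3 h4; rewrite !KlS_tup; apply: eq_bigr => p _.
case: ifP => // _; congr (_ * _); apply: ee_mod.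
  by apply: (dvdz_c2 (tb1 p) (tx1 p) h1 h3); ring.
by apply: (dvdz_c2 (tb2 p) (tx2 p) h2 h4); ring.
Qed.

Lemma KlS_tor2 (n1 n2 : nat) (s s' : int) (m1 m2 k1 k2 : int) :
  (n2.+1%:Z * n1.+1%:Z %| s * s' - 1)%Z ->
  KlS R m1 m2 k1 k2 n1.+1 n2.+1 = KlS R m1 (s * m2) k1 (s' * k2) n1.+1 n2.+1.
Proof.
move=> S; by rewrite KlS_swap (KlS_tor _ _ _ _ S) -KlS_swap.
Qed.


Lemma sum_scale (V : nmodType) (n : nat) (s s' : int) (F : int -> V) :
  (n.+1%:Z %| s * s' - 1)%Z -> (forall a b, (n.+1%:Z %| a - b)%Z -> F a = F b) ->
  \sum_(x : 'I_n.+1) F (s * (x : nat)%:Z) = \sum_(x : 'I_n.+1) F (x : nat)%:Z.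
Proof.
move=> S hF.
pose sg (x : 'I_n.+1) := ordz n (s * (x : nat)%:Z).
have sgK : forall x, ordz n (s' * (sg x : nat)%:Z) = x.
  move=> x; apply: ordz_eq.
  apply: (dvdz_c2 (- s') (x : nat)%:Z (ordz_dvd n (s * (x : nat)%:Z)) S); rewrite /sg; ring.
have sginj : injective sg by move=> x y e; rewrite -(sgK x) -(sgK y) e.
rewrite [RHS](reindex_inj sginj); apply: eq_bigr => x _; apply: hF.
exact: ordz_dvd.
Qed.

Lemma dvdz_refl0 (d a : int) : (d %| a - a)%Z.
Proof. by rewrite subrr dvdz0. Qed.

Lemma KlShat_mod (n1 n2 : nat) (a a' u u' t t' b : int) :
  (n1.+1%:Z %| a - a')%Z -> (n2.+1%:Z %| u - u')%Z -> (n1.+1%:Z %| t - t')%Z ->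
  KlShat R a u t b n1.+1 n2.+1 = KlShat R a' u' t' b n1.+1 n2.+1.
Proof.
move=> ha hu ht; rewrite /KlShat; congr (_ * _); apply: eq_bigr => x _; apply: eq_bigr => y _.
rewrite (KlS_mod (m1' := a') (m2' := y%:Z) (k1' := x%:Z) (k2' := b) ha) ?dvdz_refl0 //.
congr (_ * _ * _); apply: ee_mod.
  by apply: (dvdz_c1 (- (x : nat)%:Z) ht); ring.
by apply: (dvdz_c1 (- (y : nat)%:Z) hu); ring.
Qed.

Lemma lhs_step (n1 n2 : nat) (a v t s s' : int) :
  (n1.+1%:Z %| s - a)%Z -> (n1.+1%:Z * n2.+1%:Z %| s * s' - 1)%Z ->
  KlShat R a v t 1 n1.+1 n2.+1 = KlShat R 1 v (s' * t) 1 n1.+1 n2.+1.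
Proof.
move=> hs S; have S1 := dvdz_prodl S.
rewrite /KlShat; congr (_ * _).
pose F (z : int) := \sum_(y : 'I_n2.+1) KlS R 1 y z 1 n1.+1 n2.+1 *
   ee R (- ((s' * z) * t)) n1.+1 * ee R (- (y%:Z * v)) n2.+1.
have hF : forall a b, (n1.+1%:Z %| a - b)%Z -> F a = F b.
  move=> a0 b0 h; apply: eq_bigr => y _.
  rewrite (KlS_mod (m1' := 1) (m2' := y%:Z) (k1' := b0) (k2' := 1)) ?dvdz_refl0 //.
  congr (_ * _ * _); apply: ee_mod.
  by apply: (dvdz_c1 (- (s' * t)) h); ring.
transitivity (\sum_(x : 'I_n1.+1) F (s * (x : nat)%:Z)).
  apply: eq_bigr => x _; apply: eq_bigr => y _.
  have -> : KlS R 1 (y : nat)%:Z (s * (x : nat)%:Z) 1 n1.+1 n2.+1 = KlS R a (y : nat)%:Z (x : nat)%:Z 1 n1.+1 n2.+1.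
    rewrite (KlS_tor _ _ _ _ S); apply: KlS_mod; rewrite ?mulr1 ?dvdz_refl0 //.
    by apply: (dvdz_c1 (x : nat)%:Z S1); ring.
  congr (_ * _ * _); apply: ee_mod.
  by apply: (dvdz_c1 ((x : nat)%:Z * t) S1); ring.
rewrite (sum_scale S1 hF); apply: eq_bigr => x _; apply: eq_bigr => y _.
by have -> : (s' * (x : nat)%:Z) * t = (x : nat)%:Z * (s' * t) by ring.
Qed.

Lemma lhs_sum (n1 n2 : nat) (v s s' : int) :
  (n1.+1%:Z * n2.+1%:Z %| s * s' - 1)%Z ->
  \sum_(t : 'I_n1.+1) cabs (KlShat R 1 v (s' * t) 1 n1.+1 n2.+1) =
  \sum_(t : 'I_n1.+1) cabs (KlShat R 1 v t 1 n1.+1 n2.+1).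
Proof.
move=> S; have S1 : (n1.+1%:Z %| s' * s - 1)%Z by rewrite mulrC; exact: dvdz_prodl S.
apply: (sum_scale (F := fun z => cabs (KlShat R 1 v z 1 n1.+1 n2.+1)) S1).
by move=> a b h; rewrite (KlShat_mod (a' := 1) (u' := v) (t' := b)) ?dvdz_refl0.
Qed.

Lemma rhs_step (n1 n2 : nat) (a' w u' s s' : int) :
  (n2.+1%:Z %| s - a')%Z -> (n2.+1%:Z * n1.+1%:Z %| s * s' - 1)%Z ->
  KlShat R a' u' w 1 n2.+1 n1.+1 = KlShat R 1 (s' * w) u' 1 n1.+1 n2.+1.
Proof.
move=> hs S; have S2 := dvdz_prodl S.
rewrite /KlShat [(n2.+1%:R * _)]mulrC; congr (_ * _).
rewrite exchange_big /=; apply: eq_bigr => y _.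
pose F (z : int) := KlS R 1 z y 1 n1.+1 n2.+1 * ee R (- (y%:Z * u')) n1.+1 *
   ee R (- ((s' * z) * w)) n2.+1.
have hF : forall a b, (n2.+1%:Z %| a - b)%Z -> F a = F b.
  move=> a0 b0 h; rewrite /F.
  rewrite (KlS_mod (m1' := 1) (m2' := b0) (k1' := y%:Z) (k2' := 1)) ?dvdz_refl0 //.
  congr (_ * _); apply: ee_mod.
  by apply: (dvdz_c1 (- (s' * w)) h); ring.
transitivity (\sum_(x : 'I_n2.+1) F (s * (x : nat)%:Z)).
  apply: eq_bigr => x _; rewrite /F.
  have -> : KlS R a' (y : nat)%:Z (x : nat)%:Z 1 n2.+1 n1.+1 = KlS R 1 (s * (x : nat)%:Z) (y : nat)%:Z 1 n1.+1 n2.+1.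
    rewrite KlS_swap KlS_inv (KlS_tor2 _ _ _ _ S); apply: KlS_mod; rewrite ?dvdz_refl0 //.
    by apply: (dvdz_c2 (- s') 1 hs S2); ring.
  rewrite mulrAC; congr (_ * _); apply: ee_mod.
  by apply: (dvdz_c1 ((x : nat)%:Z * w) S2); ring.
rewrite (sum_scale S2 hF); apply: eq_bigr => x _.
by rewrite /F; have -> : (s' * (x : nat)%:Z) * w = (x : nat)%:Z * (s' * w) by ring.
Qed.

End C.

Lemma coprime_bez (x D : nat) : coprime x D -> exists y : int, (D%:Z %| y * x%:Z - 1)%Z.
Proof.
move=> h; have h' : gcdn (gcdn x 0) D == 1%N by rewrite gcdn0.
have [y [z hyz]] := prim_bez h'.
by exists y; move: hyz; rewrite mulr0 addr0.
Qed.

Lemma bez_coprime (x D : nat) (y : int) : (D%:Z %| y * x%:Z - 1)%Z -> coprime x D.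
Proof.
move=> h; have : (D%:Z %| y * x%:Z + 0 * (0%N)%:Z - 1)%Z by rewrite mul0r addr0.
by move/bez_prim; rewrite gcdn0.
Qed.

Lemma lift_unit (D1 D2 a : nat) : (0 < D1)%N -> (0 < D2)%N -> coprime a D1 ->
  exists s s' : int, (D1%:Z %| s - a%:Z)%Z /\ (D1%:Z * D2%:Z %| s * s' - 1)%Z.
Proof.
move=> D1p D2p ca.
pose m := (\prod_(p <- primes D2 | ~~ (p %| a)) p)%N.
have mp : (0 < m)%N.
  rewrite /m big_seq_cond; apply: prodn_cond_gt0 => p /andP [pin _].
  by move: pin; rewrite mem_primes => /and3P [pp _ _]; exact: prime_gt0.
pose s := (a + D1 * m)%N.
have sp : (0 < s)%N by rewrite /s addn_gt0 muln_gt0 D1p mp orbT.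
have cs2 : coprime s D2.
  rewrite coprime_has_primes //; apply/hasPn => p pD2.
  have pp : prime p by move: pD2; rewrite mem_primes => /and3P [].
  rewrite mem_primes pp sp /=.
  case: (boolP (p %| a)%N) => pa.
    have npD1 : ~~ (p %| D1)%N.
      apply/negP => pD1; have : (p %| gcdn a D1)%N by rewrite dvdn_gcd pa pD1.
      rewrite (eqP ca) dvdn1 => /eqP p1; by move: (prime_gt1 pp); rewrite p1.
    have npm : ~~ (p %| m)%N.
      rewrite /m Euclid_dvd_prod // big_has_cond; apply/hasPn => q qin /=.
      apply/negP => /andP [qa pq].
      have qp : prime q by move: qin; rewrite mem_primes => /and3P [].
      move: pq; rewrite dvdn_prime2 // => /eqP pq; by move: qa; rewrite -pq pa.
    by rewrite /s dvdn_addr // Euclid_dvdM // negb_or npD1 npm.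
  have pm : (p %| m)%N.
    rewrite /m Euclid_dvd_prod // big_has_cond; apply/hasP; exists p => //=.
    by rewrite pa dvdnn.
  by rewrite /s dvdn_addl ?dvdn_mull.
have cs1 : coprime s D1 by rewrite -coprime_modl /s addnC mulnC modnMDl coprime_modl.
have cs : coprime s (D1 * D2) by rewrite coprimeMr cs1 cs2.
have [y hy] := coprime_bez cs.
exists s%:Z, y; split.
  rewrite /s PoszD PoszM; apply: (dvdz_c1 m%:Z (dvdzz _)); ring.
by rewrite mulrC -PoszM.
Qed.

Lemma cabs_ge0 (R : realType) (z : R[i]) : 0 <= cabs z.
Proof. by case: z => a b; exact: sqrtr_ge0. Qed.

Lemma bigmax_const (R : realType) (I : finType) (P : pred I) (c : R) :
  (exists i, P i) -> 0 <= c -> \big[Num.max/0]_(i | P i) c = c.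
Proof.
move=> [i Pi] c0; rewrite big_const.
have : (0 < #|P|)%N by apply/card_gt0P; exists i.
elim: #|P| => // n IH _.
case: n IH => [|n] IH; first by rewrite /= max_l.
by rewrite iterS IH // maxxx.
Qed.

Lemma ordz1_coprime (n : nat) : coprime (ordz n 1) n.+1.
Proof.
apply: (bez_coprime (y := 1)).
apply: (dvdz_c1 (-1) (ordz_dvd n 1)); ring.
Qed.

Lemma coprime_scale (n : nat) (s s' : int) (b : 'I_n.+1) :
  (n.+1%:Z %| s * s' - 1)%Z -> coprime (ordz n (s' * (b : nat)%:Z)) n.+1 = coprime b n.+1.
Proof.
move=> S; apply/idP/idP.
  move/coprime_bez => [y hy]; apply: (bez_coprime (y := y * s')).
  apply: (dvdz_c2 y 1 (ordz_dvd n (s' * (b : nat)%:Z)) hy); ring.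
move/coprime_bez => [y hy]; apply: (bez_coprime (y := y * s)).
apply: (dvdz_c3 (- (y * s)) (y * (b : nat)%:Z) 1 (ordz_dvd n (s' * (b : nat)%:Z)) S hy); ring.
Qed.

Unset Implicit Arguments.

Theorem lemma5 (R : realType) (D1 D2 : nat) (u : int) :
  (0 < D1)%N -> (0 < D2)%N ->
  RR' R u D1 D2 = RR R u D2 D1.
Proof.
case: D1 => // n1 _; case: D2 => // n2 _.
pose g := fun v : int => \sum_(t : 'I_n1.+1) cabs (KlShat R 1 v t 1 n1.+1 n2.+1).
have g_mod : forall v v', (n2.+1%:Z %| v - v')%Z -> g v = g v'.
  move=> v v' h; apply: eq_bigr => t _.
  by rewrite (KlShat_mod R (a' := 1) (u' := v') (t' := (t : nat)%:Z)) ?dvdz_refl0.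
have g0 : forall v, 0 <= g v by move=> v; apply: sumr_ge0 => t _; exact: cabs_ge0.
pose M := \big[Num.max/0]_(b : 'I_n2.+1 | coprime b n2.+1) g ((b : nat)%:Z * u).
have M0 : 0 <= M.
  by apply: (big_ind (fun x : R => 0 <= x)) => // x y hx hy; rewrite le_max hx.
transitivity M.
  rewrite /RR'.
  transitivity (\big[Num.max/0]_(a : 'I_n1.+1 | coprime a n1.+1) M); last first.
    by rewrite bigmax_const //; exists (ordz n1 1); exact: ordz1_coprime.
  apply: eq_bigr => a ca; apply: eq_bigr => b cb.
  have [s [s' [hs S]]] := lift_unit (isT : (0 < n1.+1)%N) (isT : (0 < n2.+1)%N) ca.
  under eq_bigr do rewrite (lhs_step R _ _ hs S).
  rewrite /g; exact: (lhs_sum R ((b : nat)%:Z * u) S).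
rewrite /RR.
transitivity (\big[Num.max/0]_(a : 'I_n2.+1 | coprime a n2.+1) M).
  by rewrite bigmax_const //; exists (ordz n2 1); exact: ordz1_coprime.
apply: eq_bigr => a ca; symmetry.
have [s [s' [hs S]]] := lift_unit (isT : (0 < n2.+1)%N) (isT : (0 < n1.+1)%N) ca.
have S2 := dvdz_prodl S.
have S2' : (n2.+1%:Z %| s' * s - 1)%Z by rewrite mulrC.
transitivity (\big[Num.max/0]_(b : 'I_n2.+1 | coprime b n2.+1) g (s' * ((b : nat)%:Z * u))).
  apply: eq_bigr => b cb.
  by apply: eq_bigr => t _; rewrite (rhs_step R _ _ hs S).
pose sg (b : 'I_n2.+1) := ordz n2 (s * (b : nat)%:Z).
have sgK : forall b, ordz n2 (s' * (sg b : nat)%:Z) = b.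
  move=> b; apply: ordz_eq.
  apply: (dvdz_c2 (- s') (b : nat)%:Z (ordz_dvd n2 (s * (b : nat)%:Z)) S2'); rewrite /sg; ring.
have sginj : injective sg by move=> x y e; rewrite -(sgK x) -(sgK y) e.
rewrite (reindex_inj sginj) /=.
apply: eq_big => [b|b _]; first by rewrite /sg (coprime_scale _ S2').
apply: g_mod.
apply: (dvdz_c2 (- (s' * u)) ((b : nat)%:Z * u) (ordz_dvd n2 (s * (b : nat)%:Z)) S2'); rewrite /sg; ring.
Qed.
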